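(* For all real $x\ge4$, $H(x)\log(H(x))<\dfrac{x^2}{x+\frac{6}{\pi^2}}$.
   Context: $H(x)=\int_0^1\frac{t^x-1}{t-1}\,dt$ for real $x\ge1$; it satisfies $H(n)=1+\frac12+\cdots+\frac1n$ for $n\in\mathbb{N}$ and $H(x)=\psi(x+1)+\gamma$ with $\psi=\Gamma'/\Gamma$ the digamma function. *)

(* Defs.v *)
From Stdlib Require Import Reals.
From Coquelicot Require Import Coquelicot.
Open Scope R_scope.

(* H(x) = \int_0^1 (t^x - 1)/(t - 1) dt, with t^x the real power
   (Rpower t x = exp (x * ln t)); the integrand's values at the two
   endpoints t = 0 and t = 1 do not affect the Riemann integral. *)
Definition H (x : R) : R :=
  RInt (fun t => (Rpower t x - 1) / (t - 1)) 0 1.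

(* Main.v *)
Require Import Defs.
From Stdlib Require Import Reals Lra.
From Coquelicot Require Import Coquelicot.
Open Scope R_scope.

Definition fx (x t : R) := (Rpower t x - 1) / (t - 1).
Definition px (x t : R) := if Rlt_dec 0 t then Rpower t x else 0.
Definition g0 (x t : R) := (px x t - 1) / (t - 1).
Definition g1 (x t : R) := if Req_EM_T t 1 then x else fx x t.

Lemma Rpower_cont x z : 0 < z -> continuity_pt (fun t => Rpower t x) z.
Proof.
  intros hz. apply derivable_continuous_pt.
  exists (x * Rpower z (x - 1)). apply derivable_pt_lim_power; auto.
Qed.

Lemma fx_cont x z : 0 < z -> z <> 1 -> continuity_pt (fx x) z.
Proof.
  intros hz h1. unfold fx.
  apply (continuity_pt_div (fun t => Rpower t x - 1) (fun t => t - 1)).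
  - apply (continuity_pt_minus (fun t => Rpower t x) (fun _ => 1)).
    + now apply Rpower_cont.
    + apply continuity_pt_const. intros a b; reflexivity.
  - apply (continuity_pt_minus (fun t => t) (fun _ => 1)).
    + apply derivable_continuous_pt, derivable_pt_id.
    + apply continuity_pt_const. intros a b; reflexivity.
  - lra.
Qed.

Lemma Rpower_le_t x t : 1 <= x -> 0 < t < 1 -> 0 < Rpower t x <= t.
Proof.
  intros hx ht. split. { unfold Rpower; apply exp_pos. }
  replace x with (1 + (x - 1)) by ring. rewrite Rpower_plus, Rpower_1 by lra.
  assert (Rpower t (x - 1) <= 1).
  { unfold Rpower.
    assert (ln t < 0). { rewrite <- ln_1. apply ln_increasing; lra. }
    assert ((x - 1) * ln t <= 0) by nra.
    destruct (Req_dec ((x-1) * ln t) 0) as [e|e]. rewrite e, exp_0; lra.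
    rewrite <- exp_0 at 2. apply Rlt_le, exp_increasing. lra. }
  assert (0 < Rpower t (x-1)) by (unfold Rpower; apply exp_pos). nra.
Qed.

Lemma px_cont0 x : 1 <= x -> continuity_pt (px x) 0.
Proof.
  intros hx. unfold continuity_pt, continue_in, limit1_in, limit_in.
  intros eps he. exists (Rmin eps 1). split. { apply Rmin_pos; lra. }
  intros t [_ ht]. simpl in *. unfold R_dist in *.
  assert (h0 : px x 0 = 0). { unfold px. destruct (Rlt_dec 0 0); lra. }
  rewrite h0. unfold px. destruct (Rlt_dec 0 t) as [h|h].
  - rewrite Rminus_0_r in ht. rewrite Rabs_right in ht by lra.
    assert (ht1 : t < eps) by (eapply Rlt_le_trans; [exact ht| apply Rmin_l]).
    assert (ht2 : t < 1) by (eapply Rlt_le_trans; [exact ht| apply Rmin_r]).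
    destruct (Rpower_le_t x t hx (conj h ht2)).
    rewrite Rminus_0_r, Rabs_right by lra. lra.
  - rewrite Rminus_0_r, Rabs_R0. lra.
Qed.

Lemma px_cont x z : 0 < z -> continuity_pt (px x) z.
Proof.
  intros hz. apply (continuity_pt_locally_ext (fun t => Rpower t x) _ z); auto.
  - intros y hy. unfold Rdist in hy. unfold px. destruct (Rlt_dec 0 y) as [h|h]; auto.
    exfalso. apply Rabs_def2 in hy. lra.
  - now apply Rpower_cont.
Qed.

Lemma g0_cont x z : 1 <= x -> 0 <= z <= 1/2 -> continuity_pt (g0 x) z.
Proof.
  intros hx hz. unfold g0.
  apply (continuity_pt_div (fun t => px x t - 1) (fun t => t - 1)).
  - apply (continuity_pt_minus (px x) (fun _ => 1)).
    + destruct (Req_dec z 0) as [e|e]. subst; now apply px_cont0. apply px_cont; lra.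
    + apply continuity_pt_const. intros a b; reflexivity.
  - apply (continuity_pt_minus (fun t => t) (fun _ => 1)).
    + apply derivable_continuous_pt, derivable_pt_id.
    + apply continuity_pt_const. intros a b; reflexivity.
  - lra.
Qed.

Lemma g1_cont x z : 1/2 <= z <= 1 -> continuity_pt (g1 x) z.
Proof.
  intros hz. destruct (Req_dec z 1) as [e|e].
  - subst z. unfold continuity_pt, continue_in, limit1_in, limit_in.
    intros eps he.
    destruct (derivable_pt_lim_power 1 x Rlt_0_1 eps he) as [d hd].
    exists d. split. apply cond_pos. intros t [_ ht]. simpl in *. unfold R_dist in *.
    unfold g1. destruct (Req_EM_T 1 1) as [_|c]; [|lra].
    destruct (Req_EM_T t 1) as [e|ne]. { rewrite Rminus_diag, Rabs_R0; lra. }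
    assert (h := hd (t - 1) ltac:(lra) ht).
    replace (1 + (t - 1)) with t in h by ring.
    assert (r1 : forall y, Rpower 1 y = 1).
    { intros y. unfold Rpower. rewrite ln_1, Rmult_0_r, exp_0. reflexivity. }
    rewrite !r1, Rmult_1_r in h. exact h.
  - apply (continuity_pt_locally_ext (fx x) _ (1 - z) z); [lra| |].
    + intros y hy. unfold Rdist in hy. apply Rabs_def2 in hy. unfold g1.
      destruct (Req_EM_T y 1); auto; lra.
    + apply fx_cont; lra.
Qed.

Lemma cont_of (g : R -> R) z : continuity_pt g z -> continuous g z.
Proof. intros h. now apply continuity_pt_filterlim. Qed.

Lemma ex_left x : 1 <= x -> ex_RInt (fx x) 0 (1/2).
Proof.
  intros hx. apply (ex_RInt_ext (g0 x)).
  - intros t ht. rewrite Rmin_left in ht by lra. rewrite Rmax_right in ht by lra.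
    unfold g0, fx, px. destruct (Rlt_dec 0 t); [reflexivity | lra].
  - apply (@ex_RInt_continuous R_CompleteNormedModule). intros z hz.
    rewrite Rmin_left in hz by lra. rewrite Rmax_right in hz by lra.
    apply cont_of. now apply g0_cont.
Qed.

Lemma ex_right x : ex_RInt (fx x) (1/2) 1.
Proof.
  apply (ex_RInt_ext (g1 x)).
  - intros t ht. rewrite Rmin_left in ht by lra. rewrite Rmax_right in ht by lra.
    unfold g1. destruct (Req_EM_T t 1); [lra | reflexivity].
  - apply (@ex_RInt_continuous R_CompleteNormedModule). intros z hz.
    rewrite Rmin_left in hz by lra. rewrite Rmax_right in hz by lra.
    apply cont_of. now apply g1_cont.
Qed.

Lemma bound1 x t : 1 <= x -> 0 < t < 1 -> fx x t <= / (1 - t).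
Proof.
  intros hx ht. unfold fx. destruct (Rpower_le_t x t hx ht).
  replace ((Rpower t x - 1) / (t - 1)) with ((1 - Rpower t x) * / (1 - t)) by (field; lra).
  rewrite <- (Rmult_1_l (/ (1 - t))) at 2. apply Rmult_le_compat_r.
  apply Rlt_le, Rinv_0_lt_compat; lra. lra.
Qed.

Lemma bound2 x t : 1 <= x -> 0 < t < 1 -> fx x t <= x / t.
Proof.
  intros hx ht. unfold fx.
  assert (hl : 1 - / t <= ln t).
  { assert (h := exp_ineq1_le (ln (/ t))). rewrite exp_ln in h.
    rewrite ln_Rinv in h; lra. apply Rinv_0_lt_compat; lra. }
  assert (he : 1 + x * ln t <= Rpower t x).
  { unfold Rpower. rewrite Rmult_comm. apply exp_ineq1_le. }
  assert (hxl : x * (1 - / t) <= x * ln t) by (apply Rmult_le_compat_l; lra).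
  replace ((Rpower t x - 1) / (t - 1)) with ((1 - Rpower t x) * / (1 - t)) by (field; lra).
  replace (x / t) with ((x * (/ t - 1)) * / (1 - t)) by (field; lra).
  apply Rmult_le_compat_r. apply Rlt_le, Rinv_0_lt_compat; lra. nra.
Qed.

Lemma int_inv b : b < 1 -> 0 <= b -> is_RInt (fun t => / (1 - t)) 0 b (- ln (1 - b)).
Proof.
  intros hb hb0.
  replace (- ln (1 - b)) with (minus (- ln (1 - b)) (- ln (1 - 0))).
  2:{ rewrite Rminus_0_r, ln_1. unfold minus, plus, opp; simpl. ring. }
  apply (is_RInt_derive (fun t => - ln (1 - t))).
  - intros t ht. rewrite Rmin_left in ht by lra. rewrite Rmax_right in ht by lra.
    auto_derive. lra. field. lra.
  - intros t ht. rewrite Rmin_left in ht by lra. rewrite Rmax_right in ht by lra.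
    apply cont_of. apply (continuity_pt_inv (fun t => 1 - t)).
    apply (continuity_pt_minus (fun _ => 1) (fun t => t)).
    apply continuity_pt_const. intros a c; reflexivity.
    apply derivable_continuous_pt, derivable_pt_id. lra.
Qed.

Lemma H_bound x : 4 <= x -> H x <= ln x + 4/3.
Proof.
  intros hx. set (b := 1 - / x).
  assert (hix : 0 < / x <= 1/4).
  { split. apply Rinv_0_lt_compat; lra.
    replace (1/4) with (/ 4) by field. apply Rinv_le_contravar; lra. }
  assert (hb : 3/4 <= b < 1) by (unfold b; lra).
  assert (hx1 : 1 <= x) by lra.
  assert (e0b : ex_RInt (fx x) 0 b).
  { apply (ex_RInt_Chasles_0 _ 0 (1/2) b). lra. now apply ex_left.
    apply (@ex_RInt_Chasles_1 R_CompleteNormedModule _ _ _ 1). lra. apply ex_right. }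
  assert (eb1 : ex_RInt (fx x) b 1).
  { apply (@ex_RInt_Chasles_2 R_CompleteNormedModule _ (1/2)). lra. apply ex_right. }
  unfold H. change (RInt (fx x) 0 1 <= ln x + 4/3).
  rewrite <- (@RInt_Chasles R_CompleteNormedModule _ 0 b 1 e0b eb1).
  change (plus (RInt (fx x) 0 b) (RInt (fx x) b 1)) with
    (RInt (fx x) 0 b + RInt (fx x) b 1).
  assert (h1 : RInt (fx x) 0 b <= ln x).
  { assert (hi := int_inv b ltac:(lra) ltac:(lra)).
    replace (ln x) with (- ln (1 - b)).
    2:{ unfold b. replace (1 - (1 - / x)) with (/ x) by ring. rewrite ln_Rinv; lra. }
    rewrite <- (is_RInt_unique _ _ _ _ hi).
    apply RInt_le. lra. exact e0b. eexists; exact hi.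
    intros t ht. apply bound1; lra. }
  assert (h2 : RInt (fx x) b 1 <= 4/3).
  { apply Rle_trans with (RInt (fun _ => x / b) b 1).
    apply RInt_le. lra. exact eb1. apply ex_RInt_const.
    intros t ht. apply Rle_trans with (x / t). apply bound2; lra.
    unfold Rdiv. apply Rmult_le_compat_l. lra. apply Rinv_le_contravar; lra.
    rewrite RInt_const. unfold scal; simpl. unfold mult; simpl.
    unfold b. replace (1 - (1 - / x)) with (/ x) by ring.
    replace (/ x * (x / (1 - / x))) with (/ (1 - / x)) by (field; lra).
    replace (4/3) with (/ (3/4)) by field. apply Rinv_le_contravar; lra. }
  lra.
Qed.

Lemma exp_dbl a : exp (2 * a) = exp a * exp a.
Proof. replace (2 * a) with (a + a) by ring. apply exp_plus. Qed.

Lemma exp1_lb : 263/100 <= exp 1.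
Proof.
  assert (h0 : 17/16 <= exp (1/16)) by (assert (h := exp_ineq1_le (1/16)); lra).
  assert (h1 : (17/16)^2 <= exp (1/8)).
  { replace (1/8) with (2 * (1/16)) by field. rewrite exp_dbl. simpl.
    assert (0 < 17/16) by lra. nra. }
  assert (h2 : (17/16)^4 <= exp (1/4)).
  { replace (1/4) with (2 * (1/8)) by field. rewrite exp_dbl.
    replace ((17/16)^4) with ((17/16)^2 * (17/16)^2) by ring.
    assert (0 < (17/16)^2) by (simpl; lra). nra. }
  assert (h3 : (17/16)^8 <= exp (1/2)).
  { replace (1/2) with (2 * (1/4)) by field. rewrite exp_dbl.
    replace ((17/16)^8) with ((17/16)^4 * (17/16)^4) by ring.
    assert (0 < (17/16)^4) by (simpl; lra). nra. }
  assert (h4 : (17/16)^16 <= exp 1).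
  { replace (exp 1) with (exp (2 * (1/2))) by (f_equal; field). rewrite exp_dbl.
    replace ((17/16)^16) with ((17/16)^8 * (17/16)^8) by ring.
    assert (0 < (17/16)^8) by (simpl; lra). nra. }
  simpl in h4. lra.
Qed.

Lemma ln_le_k y : 0 < y -> ln y <= y * exp (-1).
Proof.
  intros hy. assert (h := exp_ineq1_le (ln y + -1)).
  rewrite exp_plus, exp_ln in h by lra. lra.
Qed.

Theorem mainTheorem15 (x : R) (hx : 4 <= x) :
  H x * ln (H x) < x ^ 2 / (x + 6 / PI ^ 2).
Proof.
  set (k := exp (-1)).
  assert (hk : k * exp 1 = 1) by (unfold k; rewrite <- exp_plus; replace (-1+1) with 0 by ring; apply exp_0).
  assert (hk0 : 0 < k) by apply exp_pos.
  assert (hE := exp1_lb).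
  assert (hk1 : k <= 1 / 2.63) by (apply Rmult_le_reg_r with 2.63; [lra | nra]).
  assert (hHb := H_bound x hx).
  set (s := sqrt x).
  assert (hs : s * s = x) by (apply sqrt_sqrt; lra).
  assert (hs2 : 2 <= s).
  { unfold s. replace 2 with (sqrt 4). apply sqrt_le_1_alt; lra.
    replace 4 with (2*2) by ring. apply sqrt_square; lra. }
  assert (ha : ln x <= 2 * k * s).
  { rewrite <- hs, ln_mult by lra. assert (h := ln_le_k s ltac:(lra)). unfold k. lra. }
  assert (ha0 : 0 <= ln x).
  { rewrite <- ln_1. apply Rlt_le. apply Rle_lt_trans with (ln 1). lra. apply ln_increasing; lra. }
  set (L := ln x + 4/3) in *.
  assert (hpi : 3 < PI) by (assert (h := PI2_3_2); lra).
  set (c := 6 / PI ^ 2).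
  assert (hc0 : 0 < c) by (unfold c; apply Rdiv_lt_0_compat; [lra | nra]).
  assert (hc1 : c < 2/3).
  { unfold c. apply Rmult_lt_reg_r with (PI ^ 2). nra.
    unfold Rdiv. rewrite Rmult_assoc, Rinv_l by nra. nra. }
  assert (hR : x - 2/3 < x ^ 2 / (x + c)).
  { apply Rmult_lt_reg_r with (x + c). lra. unfold Rdiv.
    rewrite Rmult_assoc, Rinv_l by lra. nra. }
  assert (hL : k * L ^ 2 < x - 2/3).
  { assert (hL1 : L <= 4/3 + 2 / 2.63 * s).
    { unfold L. assert (2 * k * s <= 2 / 2.63 * s) by nra. lra. }
    assert (hLL : L ^ 2 <= (4/3 + 2 / 2.63 * s) ^ 2).
    { assert (0 <= L) by (unfold L; lra). apply pow_incr. lra. }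
    assert (k * L ^ 2 <= 1/2.63 * (4/3 + 2 / 2.63 * s) ^ 2).
    { apply Rmult_le_compat; try lra. apply pow_le. unfold L; lra. }
    rewrite <- hs. nra. }
  apply Rlt_trans with (x - 2/3); [| exact hR].
  set (y := H x) in *. clearbody y.
  destruct (Rlt_dec 0 y) as [hy|hy].
  - assert (h := ln_le_k y hy). fold k in h.
    assert (y * ln y <= y * (y * k)) by (apply Rmult_le_compat_l; lra).
    assert (y ^ 2 <= L ^ 2) by (apply pow_incr; lra).
    nra.
  - assert (hln : ln y = 0).
    { unfold ln. destruct (Rlt_dec 0 y) as [r|]. exfalso; exact (hy r). reflexivity. }
    rewrite hln. assert (0 <= k * L^2) by (apply Rmult_le_pos; [lra | apply pow2_ge_0]). nra.
Qed.
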